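(* Let $T^4=\mathbb{R}^4/\mathbb{Z}^4$, and let $G$ be a constant Riemannian metric and $B$ a constant real 2-form on $T^4$ with all components $G_{IJ},B_{IJ}\in\mathbb{Q}$ (i.e. the $\mathcal N=(1,1)$ SCFT for $(T^4;G,B)$ is rational). Let $I$ be a polarizable constant complex structure on $T^4$ with which $G$ is compatible and such that the Hodge $(2,0)$ component of the class of $B$ (with respect to $I$) vanishes. Then there exists a primitive subgroup $\Gamma_f\subset H_1(T^4;\mathbb{Z})$ of rank $2$ such that the T-dual along $\Gamma_f$ has a geometric SYZ-mirror; that is, $\omega|_{\Gamma_f\otimes\mathbb{R}}=0$ and $B|_{\Gamma_f\otimes\mathbb{R}}=0$.
   Context: Coordinates $X^I$ normalized so that $H_1(T^4;\mathbb{Z})=\mathbb{Z}^4$ and $2\pi\sqrt{\alpha'}=1$; $G=G_{IJ}dX^I\otimes dX^J$, $B=\frac12B_{IJ}dX^I\wedge dX^J$. Compatible: $G(Iu,Iv)=G(u,v)$. Polarizable: some $\psi\in H^2(T^4;\mathbb{Z})\cap H^{1,1}$ has $\psi(I\cdot,\cdot)$ positive definite. Kähler form: $\omega=\frac12\omega_{IJ}dX^I\wedge dX^J$, $\omega_{IJ}=I^K{}_IG_{KJ}$. For a rank-2 primitive $\Gamma_f\subset H_1(T^4;\mathbb{Z})$ (so $H_1(T^4;\mathbb{Z})=\Gamma_f\oplus\Gamma_b$ for some $\Gamma_b$), string-theoretic T-duality along the fibers $\Gamma_f\otimes\mathbb{R}/\Gamma_f$ maps the SCFT with its $\mathcal N=(2,2)$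 structure defined by $I$ to another torus SCFT; one says $(T^4;G,B;I)$ has a geometric SYZ-mirror along $\Gamma_f$ if the mirror $\mathcal N=(2,2)$ currents come from a complex structure on the T-dual torus. By a known result this holds iff $\omega$ and $B$ restrict to zero on $\Gamma_f\otimes\mathbb{R}$ (2-forms evaluated on pairs of vectors in $\Gamma_f\otimes\mathbb{R}$). *)

(* Defs.v *)
From HB Require Import structures.
From mathcomp Require Import all_boot all_order all_algebra.
From mathcomp Require Import reals.
Set Implicit Arguments. Unset Strict Implicit. Unset Printing Implicit Defensive.
Import Order.TTheory GRing.Theory Num.Theory.
Local Open Scope ring_scope.

(* Conventions: coordinates X^1..X^4 indexed by 'I_4; tangent vectors are
   column vectors 'cV[R]_4; a constant bilinear form with components A_{IJ}
   is the matrix A, evaluated as A(u,v) = A_{IJ} u^I v^J = u^T A v.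
   The 2-form B = 1/2 B_{IJ} dX^I /\ dX^J evaluates as B(u,v) = u^T B v.
   A complex structure I is a matrix with (I u)^K = I^K_L u^L, I i j = I^i_j. *)

Definition bil (R : realType) (A : 'M[R]_4) (u v : 'cV[R]_4) : R :=
  (u^T *m A *m v) 0 0.

Definition is_metric (R : realType) (G : 'M[R]_4) : Prop :=
  G^T = G /\ forall u : 'cV[R]_4, u != 0 -> 0 < bil G u u.

Definition is_2form (R : realType) (B : 'M[R]_4) : Prop := B^T = - B.

Definition is_cplx_structure (R : realType) (I : 'M[R]_4) : Prop :=
  I *m I = - 1%:M.

Definition compatible (R : realType) (G I : 'M[R]_4) : Prop :=
  forall u v, bil G (I *m u) (I *m v) = bil G u v.

(* The (2,0) Hodge component of a real 2-form A w.r.t. I vanishes: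
   A^{2,0}(u,v) = A(u^{1,0}, v^{1,0}) with u^{1,0} = (u - i I u)/2, and
   4 A(u - iIu, v - iIv) = [A(u,v) - A(Iu,Iv)] - i [A(Iu,v) + A(u,Iv)];
   we require both real and imaginary parts to vanish. *)
Definition hodge20_zero (R : realType) (I A : 'M[R]_4) : Prop :=
  forall u v,
    bil A u v - bil A (I *m u) (I *m v) = 0 /\
    bil A (I *m u) v + bil A u (I *m v) = 0.

Definition int_mx (R : realType) (m n : nat) (M : 'M[int]_(m, n)) : 'M[R]_(m, n) :=
  map_mx (fun z : int => z%:~R) M.

(* Polarizable: some integral 2-form psi (class in H^2(T^4;Z)) of Hodge type (1,1)
   with psi(I.,.) positive definite. *)
Definition polarizable (R : realType) (I : 'M[R]_4) : Prop :=
  exists psi : 'M[int]_4,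
    is_2form (int_mx R psi) /\ hodge20_zero I (int_mx R psi) /\
    (forall u v, bil (int_mx R psi) (I *m u) v = bil (int_mx R psi) (I *m v) u) /\
    (forall u : 'cV[R]_4, u != 0 -> 0 < bil (int_mx R psi) (I *m u) u).

(* Kähler form: omega_{IJ} = I^K_I G_{KJ}, i.e. omega = I^T G. *)
Definition kahler_form (R : realType) (G I : 'M[R]_4) : 'M[R]_4 := I^T *m G.

Definition rational_mx (R : realType) (A : 'M[R]_4) : Prop :=
  forall i j, exists q : rat, A i j = ratr q.

Definition vanishes_on_span (R : realType) (A : 'M[R]_4) (f1 f2 : 'cV[R]_4) : Prop :=
  forall a b c d : R, bil A (a *: f1 + b *: f2) (c *: f1 + d *: f2) = 0.

(* Main.v *)
Require Import Defs.
From HB Require Import structures.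
From mathcomp Require Import all_boot all_order all_algebra.
From mathcomp Require Import reals.
Import Order.TTheory GRing.Theory Num.Theory.
From mathcomp Require Import ring lra.
Set Implicit Arguments. Unset Strict Implicit. Unset Printing Implicit Defensive.
Local Open Scope ring_scope.


Section Bil.
Variable R : realType.
Implicit Types A K : 'M[R]_4.
Implicit Types u v : 'cV[R]_4.

Lemma int_mxM m n p (A : 'M[int]_(m,n)) (B : 'M[int]_(n,p)) :
  int_mx R (A *m B) = int_mx R A *m int_mx R B.
Proof. exact: map_mxM. Qed.

Lemma int_mxT m n (A : 'M[int]_(m,n)) : int_mx R A^T = (int_mx R A)^T.
Proof. by rewrite /int_mx map_trmx. Qed.

Lemma int_bil (A : 'M[int]_4) (u v : 'cV[int]_4) :
  bil (int_mx R A) (int_mx R u) (int_mx R v) = ((u^T *m A *m v) 0 0)%:~R.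
Proof. by rewrite /bil -int_mxT -!int_mxM /int_mx mxE. Qed.

Lemma bil_mulr A K u v : bil A u (K *m v) = bil (A *m K) u v.
Proof. by rewrite /bil !mulmxA. Qed.

Lemma bil_mull A K u v : bil A (K *m u) v = bil (K^T *m A) u v.
Proof. by rewrite /bil trmx_mul !mulmxA. Qed.

Lemma bil_tr A u v : bil A u v = bil A^T v u.
Proof.
have -> : bil A u v = ((u^T *m A *m v)^T) 0 0 by rewrite /bil [RHS]mxE.
by rewrite /bil !trmx_mul trmxK mulmxA.
Qed.

Lemma bil_antisym A u : A^T = - A -> bil A u u = 0.
Proof.
move=> hA; have h := bil_tr A u u; rewrite hA /bil mulmxN mulNmx [RHS]mxE in h.
rewrite /bil; lra.
Qed.

Lemma bil_delta A i j : bil A (delta_mx i 0) (delta_mx j 0) = A i j.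
Proof.
by rewrite /bil -colE trmx_delta -rowE mxE mxE.
Qed.

Lemma bil_eqP A B : (forall u v, bil A u v = bil B u v) -> A = B.
Proof. by move=> h; apply/matrixP => i j; rewrite -!bil_delta h. Qed.

Lemma bilDl A u1 u2 v : bil A (u1 + u2) v = bil A u1 v + bil A u2 v.
Proof. by rewrite /bil linearD /= !mulmxDl mxE. Qed.
Lemma bilDr A u v1 v2 : bil A u (v1 + v2) = bil A u v1 + bil A u v2.
Proof. by rewrite /bil !mulmxDr mxE. Qed.
Lemma bilZl A a u v : bil A (a *: u) v = a * bil A u v.
Proof. by rewrite /bil linearZ /= -!scalemxAl mxE. Qed.
Lemma bilZr A a u v : bil A u (a *: v) = a * bil A u v.
Proof. by rewrite /bil -!scalemxAr mxE. Qed.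
Lemma bilZ A a u v : bil (a *: A) u v = a * bil A u v.
Proof. by rewrite /bil -scalemxAr -scalemxAl mxE. Qed.
Lemma bilN A u v : bil (- A) u v = - bil A u v.
Proof. by rewrite /bil mulmxN mulNmx mxE. Qed.
Lemma bilD A B u v : bil (A + B) u v = bil A u v + bil B u v.
Proof. by rewrite /bil mulmxDr mulmxDl mxE. Qed.
Lemma bil0 u v : bil (0 : 'M[R]_4) u v = 0.
Proof. by rewrite /bil mulmx0 mul0mx mxE. Qed.

Lemma vanish_of A f1 f2 : A^T = - A -> bil A f1 f2 = 0 -> vanishes_on_span A f1 f2.
Proof.
move=> hA h a b c d.
rewrite !bilDl !bilDr !bilZl !bilZr !bil_antisym // h.
rewrite (bil_tr A f2) hA bilN h.
by rewrite !(mulr0, oppr0, addr0).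
Qed.


Lemma bil_deltamx (i j : 'I_4) u v : bil (delta_mx i j) u v = u i 0 * v j 0.
Proof.
rewrite /bil -(mul_delta_mx (0 : 'I_1)) mulmxA -colE -mulmxA -rowE.
by rewrite mxE big_ord1 !mxE.
Qed.

Lemma bil_entry n (X : 'M[R]_(4,n)) A (a b : 'I_n) :
  (X^T *m A *m X) a b = bil A (col a X) (col b X).
Proof.
have -> : (X^T *m A *m X) a b = ((delta_mx 0 a : 'rV[R]_n) *m (X^T *m A *m X) *m (delta_mx b 0 : 'cV[R]_n)) 0 0.
  by rewrite -rowE -colE !mxE.
by rewrite /bil !colE trmx_mul trmx_delta !mulmxA.
Qed.

Lemma ord2_cases (a : 'I_2) : a = 0 \/ a = 1.
Proof. by case: a => [[|[|//]] ?]; [left|right]; apply: val_inj. Qed.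

Definition minor (f g : 'cV[int]_4) (i j : 'I_4) := f i 0 * g j 0 - f j 0 * g i 0.

Lemma colD0 (d : seq int) :
  col 0 (int_mx R (\matrix_(a < 4, b < 2) (d`_a *+ (a == b :> nat))))
  = (d`_0)%:~R *: delta_mx 0 0.
Proof.
apply/matrixP => k l; rewrite !mxE (ord1 l).
by case: k => [[|[|[|[|//]]]] ?] /=; rewrite ?mulr1 ?mulr0 ?mulr1n ?mulr0n.
Qed.

Lemma colD1 (d : seq int) :
  col 1 (int_mx R (\matrix_(a < 4, b < 2) (d`_a *+ (a == b :> nat))))
  = (d`_1)%:~R *: delta_mx 1 0.
Proof.
apply/matrixP => k l; rewrite !mxE (ord1 l).
by case: k => [[|[|[|[|//]]]] ?] /=; rewrite ?mulr1 ?mulr0 ?mulr1n ?mulr0n.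
Qed.


Lemma plane_ext (f g : 'cV[int]_4) (i j : 'I_4) : minor f g i j != 0 ->
  exists F : 'M[int]_4, \det F \is a GRing.unit /\
    forall A : 'M[R]_4, A^T = - A ->
      bil A (int_mx R f) (int_mx R g) = 0 ->
      bil A (int_mx R (col 0 F)) (int_mx R (col 1 F)) = 0.
Proof.
move=> hmin.
pose M : 'M[int]_(4,2) := \matrix_(a, b) (if b == 0 then f a 0 else g a 0).
have [L hL [Rm hR [d _ hM]]] := int_Smith_normal_form M.
set D := \matrix_(a, b) _ in hM.
pose Lr := int_mx R L; pose Dr := int_mx R D; pose Rr := int_mx R Rm.
have hMr : int_mx R M = Lr *m Dr *m Rr by rewrite hM !int_mxM.
have c0 : col 0 (int_mx R M) = int_mx R f.
  by apply/matrixP => k l; rewrite !mxE (ord1 l).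
have c1 : col 1 (int_mx R M) = int_mx R g.
  by apply/matrixP => k l; rewrite !mxE (ord1 l).
have hRu : Rr \in unitmx.
  rewrite unitmxE det_map_mx; apply: rmorph_unit; by rewrite -unitmxE.
have key : forall A : 'M[R]_4,
    (int_mx R M)^T *m A *m int_mx R M =
    Rr^T *m (Dr^T *m (Lr^T *m A *m Lr) *m Dr) *m Rr.
  by move=> A; rewrite hMr !trmx_mul !mulmxA.
have Zent : forall A : 'M[R]_4, forall a b : 'I_2,
    (Dr^T *m (Lr^T *m A *m Lr) *m Dr) a b =
    bil (Lr^T *m A *m Lr) (col a Dr) (col b Dr) by move=> A a b; rewrite bil_entry.
have Z0 : forall A : 'M[R]_4, A^T = - A ->
    ((d`_0)%:~R * (d`_1)%:~R == 0 :> R) ->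
    Dr^T *m (Lr^T *m A *m Lr) *m Dr = 0.
  move=> A hA hd; have hY : (Lr^T *m A *m Lr)^T = - (Lr^T *m A *m Lr).
    by rewrite !trmx_mul trmxK hA mulNmx mulmxN mulmxA.
  apply/matrixP => a b; rewrite Zent mxE.
  case: (ord2_cases a) => ->; case: (ord2_cases b) => ->;
  rewrite ?(colD0, colD1) ?bilZl ?bilZr ?bil_antisym ?mulr0 //.
  - by move: hd => /eqP; rewrite mulrA => ->; rewrite mul0r.
  - by move: hd => /eqP; rewrite mulrC mulrA => ->; rewrite mul0r.
have hd : (d`_0)%:~R * (d`_1)%:~R != 0 :> R.
  apply/negP => hd.
  pose E : 'M[R]_4 := delta_mx i j - delta_mx j i.
  have hE : E^T = - E by rewrite /E linearB /= !trmx_delta opprB.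
  have := key E; rewrite (Z0 E hE hd) mulmx0 mul0mx => /matrixP /(_ 0 1).
  rewrite bil_entry c0 c1 mxE /E bilD bilN !bil_deltamx /int_mx !mxE.
  move=> /eqP; rewrite -!rmorphM -rmorphB intr_eq0 => /eqP h.
  by move: hmin; rewrite /minor h eqxx.
exists L; split; first by rewrite -unitmxE.
move=> A hA hfg.
have hZ : Dr^T *m (Lr^T *m A *m Lr) *m Dr = 0.
  have h0 : (int_mx R M)^T *m A *m int_mx R M = 0.
    apply/matrixP => a b; rewrite bil_entry mxE.
    case: (ord2_cases a) => ->; case: (ord2_cases b) => ->;
      rewrite ?c0 ?c1 ?bil_antisym //.
    by rewrite bil_tr hA bilN hfg oppr0.
  move: h0; rewrite key => h0.
  set Z := Dr^T *m _ *m Dr in h0 *.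
  have -> : Z = invmx Rr^T *m (Rr^T *m Z *m Rr) *m invmx Rr.
    by rewrite mulmxA mulmxK // mulKmx // unitmx_tr.
  by rewrite h0 mulmx0 mul0mx.
have := congr1 (fun X : 'M[R]_2 => X 0 1) hZ; rewrite /= Zent mxE colD0 colD1 bilZl bilZr.
rewrite mulrA => /eqP; rewrite mulf_eq0 (negbTE hd) /= => /eqP.
rewrite -bil_mulr -bil_mull -!colE.
by rewrite /int_mx !map_col.
Qed.

End Bil.

Lemma entry_delta (A : 'M[int]_4) (i j : 'I_4) :
  ((delta_mx i 0 : 'cV[int]_4)^T *m A *m (delta_mx j 0 : 'cV[int]_4)) 0 0 = A i j.
Proof. by rewrite -colE trmx_delta -rowE mxE mxE. Qed.

Lemma deltaE (i k : 'I_4) : (delta_mx i 0 : 'cV[int]_4) k 0 = (k == i)%:R.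
Proof. by rewrite mxE andbT. Qed.

Lemma nonscalar_witness (K : 'M[int]_4) : K != (K 0 0)%:M ->
  exists f : 'cV[int]_4, exists i j, minor f (K *m f) i j != 0.
Proof.
move=> hK.
case: (pickP (fun p : 'I_4 * 'I_4 => (p.1 != p.2) && (K p.1 p.2 != 0))) =>
  [[a b] /= /andP [hab hKab] | hno].
  exists (delta_mx b 0), b, a; rewrite -colE /minor !deltaE !mxE eqxx.
  by rewrite eq_sym (negbTE hab) ?mul1r ?mul0r ?subr0 eq_sym.
have off : forall a b : 'I_4, a != b -> K a b = 0.
  by move=> a b hab; have := hno (a, b); rewrite /= hab /= => /negbFE/eqP.
case: (pickP (fun c : 'I_4 => K c c != K 0 0)) => [c hc | hall]; last first.
  case/negP: hK; apply/eqP/matrixP => a0 b0; rewrite mxE.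
  have [<-|hab0] := eqVneq a0 b0.
    by move: (hall a0) => /negbFE/eqP ->; rewrite ?eqxx ?mulr1n.
  by rewrite (off a0 b0 hab0) ?(negbTE hab0) ?mulr0n.
have hc0 : c != 0 by apply: contraNneq hc => ->.
exists (delta_mx 0 0 + delta_mx c 0), 0, c.
have e1 : (0 == c) = false by rewrite eq_sym (negbTE hc0).
rewrite mulmxDr -!colE /minor !mxE !eqxx !andbT e1 (negbTE hc0) /=.
rewrite (off 0 c) ?e1 // (off c 0) ?hc0 //.
rewrite !mulr1n !mulr0n !addr0 !add0r !mul1r.
apply: contraNneq hc => /eqP; rewrite subr_eq0 => /eqP ->.
by rewrite eqxx.
Qed.

Lemma single_witness (A : 'M[int]_4) :
  exists f g : 'cV[int]_4, exists i j,
    minor f g i j != 0 /\ (f^T *m A *m g) 0 0 = 0.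
Proof.
have h01 : (0 : 'I_4) != 1 by [].
have h02 : (0 : 'I_4) != 2 by [].
have h12 : (1 : 'I_4) != 2 by [].
have [h|h] := eqVneq (A 0 1) 0.
  exists (delta_mx 0 0), (delta_mx 1 0), 0, 1; split; last by rewrite entry_delta.
  by rewrite /minor !deltaE.
exists (delta_mx 0 0), (A 0 1 *: delta_mx 2 0 - A 0 2 *: delta_mx 1 0), 0, 2.
split.
  by rewrite /minor !mxE /= !(mul1r, mulr1, mulr0, mul0r, subr0).
have eB : forall M N : 'M[int]_1, (M - N) 0 0 = M 0 0 - N 0 0 by move=> M N; rewrite !mxE.
have eZ : forall a (M : 'M[int]_1), (a *: M) 0 0 = a * M 0 0 by move=> a M; rewrite mxE.
rewrite mulmxBr -!scalemxAr eB !eZ !entry_delta.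
by rewrite mulrC subrr.
Qed.


Section GA.
Variable R : realType.
Variable G : 'M[R]_4.
Hypothesis hG : G^T = G.
Hypothesis hpos : forall u, u != 0 -> 0 < bil G u u.

Lemma bilNr (A : 'M[R]_4) u v : bil A u (- v) = - bil A u v.
Proof. by rewrite /bil mulmxN mxE. Qed.

Definition sa (X : 'M[R]_4) := X^T *m G = - (G *m X).
Definition ss (X : 'M[R]_4) := X^T *m G = G *m X.

Lemma L1 X Y : sa X -> sa Y -> X *m Y = Y *m X -> ss (X *m Y).
Proof.
rewrite /sa /ss => hX hY hc.
by rewrite trmx_mul -mulmxA hX mulmxN [in LHS]mulmxA hY mulNmx opprK -mulmxA -hc.
Qed.

Lemma L2 X Z : sa X -> ss Z -> X *m Z = Z *m X -> sa (X *m Z).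
Proof.
rewrite /sa /ss => hX hZ hc.
by rewrite trmx_mul -mulmxA hX mulmxN [in LHS]mulmxA hZ -mulmxA -hc.
Qed.

Lemma L3 X Y : sa X -> sa Y -> sa (X *m Y *m X).
Proof.
rewrite /sa => hX hY.
rewrite !trmx_mul -!mulmxA hX !mulmxN [Y^T *m (G *m _)]mulmxA hY !mulNmx !mulmxN opprK.
by rewrite !mulmxA hX !mulNmx.
Qed.

Lemma L5 X Y : sa X -> sa Y -> ss (X *m Y + Y *m X).
Proof.
rewrite /sa /ss => hX hY.
rewrite linearD /= !trmx_mul !mulmxDl -!mulmxA hX hY !mulmxN !mulmxA hX hY.
by rewrite !mulNmx !opprK mulmxDr addrC !mulmxA.
Qed.

Lemma saD X Y : sa X -> sa Y -> sa (X + Y).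
Proof. by rewrite /sa => hX hY; rewrite linearD /= mulmxDl hX hY mulmxDr opprD. Qed.

Lemma saZ a X : sa X -> sa (a *: X).
Proof. by rewrite /sa => hX; rewrite linearZ /= -scalemxAl hX -scalemxAr scalerN. Qed.

Lemma ssN X : ss X -> ss (- X).
Proof. by rewrite /ss => hX; rewrite linearN /= mulNmx hX mulmxN. Qed.

Lemma sa0 : sa 0.
Proof. by rewrite /sa linear0 mul0mx mulmx0 oppr0. Qed.

Lemma sa_quad X u : sa X -> bil (G *m X) u u = 0.
Proof.
move=> hX; apply: bil_antisym.
by rewrite trmx_mul hG hX.
Qed.

Lemma ss_bil X u v : ss X -> bil G (X *m u) v = bil G u (X *m v).
Proof. by move=> hX; rewrite bil_mull hX bil_mulr. Qed.

Lemma G_sym u v : bil G u v = bil G v u.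
Proof. by rewrite bil_tr hG. Qed.

Lemma bil_pos0 u : 0 <= bil G u u.
Proof.
have [->|/hpos/ltW //] := eqVneq u 0.
by rewrite /bil mulmx0 mxE.
Qed.

Lemma mx_eq0_cols (X : 'M[R]_4) : (forall v : 'cV[R]_4, X *m v = 0) -> X = 0.
Proof.
move=> h; apply/matrixP => i j.
by have := congr1 (fun M : 'cV[R]_4 => M i 0) (h (delta_mx j 0)); rewrite -colE !mxE.
Qed.

Lemma mx_ne0_col (X : 'M[R]_4) : X != 0 -> exists v : 'cV[R]_4, X *m v != 0.
Proof.
move=> hX; case: (pickP (fun j : 'I_4 => X *m (delta_mx j 0 : 'cV[R]_4) != 0)) => [j hj|h].
  by exists (delta_mx j 0).
case/negP: hX; apply/eqP/matrixP => i j.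
have /negbFE/eqP hj := h j.
by have := congr1 (fun M : 'cV[R]_4 => M i 0) hj; rewrite -colE !mxE.
Qed.


Lemma sq_diff1 (X : 'M[R]_4) a : (X - a%:M) *m (X + a%:M) = X *m X - (a * a)%:M.
Proof.
rewrite mulmxBl !mulmxDr scalar_mxC -scalar_mxM opprD addrA.
by rewrite addrK.
Qed.

Lemma sq_diff2 (X : 'M[R]_4) a : (X + a%:M) *m (X - a%:M) = X *m X - (a * a)%:M.
Proof.
rewrite mulmxDl !mulmxBr scalar_mxC -scalar_mxM addrA.
by rewrite subrK.
Qed.

Lemma psd_scalar T tau : ss T -> (forall u, u != 0 -> 0 < bil G u (T *m u)) ->
  T *m T = tau%:M -> exists s, 0 < s /\ T = s%:M.
Proof.
move=> hT hp hTT.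
have htau : 0 < tau.
  pose u : 'cV[R]_4 := delta_mx 0 0.
  have hu : u != 0.
    apply/eqP => /matrixP /(_ 0 0); rewrite !mxE /=. by move/eqP; rewrite oner_eq0.
  have hw : T *m u != 0.
    by apply: contraTneq (hp u hu) => ->; rewrite /bil mulmx0 mxE ltxx.
  have := hp _ hw; rewrite mulmxA hTT mul_scalar_mx bilZr G_sym.
  by rewrite pmulr_lgt0 // hp.
pose s := Num.sqrt tau.
have hs : 0 < s by rewrite sqrtr_gt0.
have hss : s * s = tau by rewrite -expr2 sqr_sqrtr // ltW.
exists s; split => //.
apply/eqP; rewrite -subr_eq0; apply/eqP/mx_eq0_cols => v.
apply/eqP/negP => /negP hw.
have e0 : (T + s%:M) *m ((T - s%:M) *m v) = 0.
  by rewrite mulmxA sq_diff2 hss hTT subrr mul0mx.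
move/eqP: e0; rewrite mulmxDl addr_eq0 mul_scalar_mx => /eqP e.
have := hp _ hw; rewrite e bilNr bilZr.
have := hpos hw; set b := bil G _ _ => hb.
by rewrite oppr_gt0 pmulr_rlt0 // ltNge (ltW hb).
Qed.


Lemma case_b X Y k c : ss X -> X != 0 -> X *m X = k%:M -> X *m Y = - (Y *m X) ->
  (forall u, u != 0 -> 0 < bil G u (Y *m u) + c * bil G u (X *m u)) ->
  exists e, e != 0 /\ X = e%:M.
Proof.
move=> hX hX0 hXX hXY hp.
have hk : 0 < k.
  have [u hu] := mx_ne0_col hX0.
  have hu0 : u != 0 by apply: contraNneq hu => ->; rewrite mulmx0.
  have := hpos hu; rewrite ss_bil // mulmxA hXX mul_scalar_mx bilZr.
  by rewrite pmulr_lgt0 // hpos.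
pose s := Num.sqrt k.
have hs : 0 < s by rewrite sqrtr_gt0.
have hss : s * s = k by rewrite -expr2 sqr_sqrtr // ltW.
have eig0 : forall (u : 'cV[R]_4) (e : R), e != 0 -> X *m u = e *: u -> bil G u (Y *m u) = 0.
  move=> u e he hu.
  have h1 : e * bil G u (Y *m u) = - (e * bil G u (Y *m u)).
    rewrite -{1}bilZl -hu ss_bil // mulmxA hXY mulNmx -mulmxA hu.
    by rewrite -scalemxAr bilNr bilZr.
  have : 2 * (e * bil G u (Y *m u)) = 0 by rewrite mulr2n mulrDl !mul1r {1}h1 addNr.
  by move/eqP; rewrite !mulf_eq0 pnatr_eq0 (negbTE he) /= => /eqP.
have eigs : forall (u : 'cV[R]_4) (e : R), u != 0 -> e != 0 -> X *m u = e *: u -> 0 < c * e.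
  move=> u e hu0 he hu; have := hp _ hu0; rewrite (eig0 u e) // add0r hu bilZr.
  by rewrite mulrA pmulr_lgt0 // hpos.
have [->|h1] := eqVneq X s%:M; first by exists s; rewrite gt_eqF.
have [->|h2] := eqVneq X (- s)%:M.
  by exists (- s); rewrite oppr_eq0 gt_eqF.
have hp1 : X + s%:M != 0.
  apply: contraNneq h2 => /eqP; rewrite addr_eq0 => /eqP ->.
  by rewrite raddfN.
have hm1 : X - s%:M != 0 by rewrite subr_eq0.
have [v hv] := mx_ne0_col hp1.
have [w hw] := mx_ne0_col hm1.
have c1 : 0 < c * s.
  apply: (eigs _ _ hv); first by rewrite gt_eqF.
  apply/eqP; rewrite -subr_eq0 -mul_scalar_mx -mulmxBl mulmxA sq_diff1 hss hXX.
  by rewrite subrr mul0mx.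
have c2 : 0 < c * - s.
  apply: (eigs _ _ hw); first by rewrite oppr_eq0 gt_eqF.
  apply/eqP; rewrite -subr_eq0 -mul_scalar_mx -mulmxBl mulmxA raddfN opprK.
  by rewrite sq_diff2 hss hXX subrr mul0mx.
by move: c2; rewrite mulrN oppr_gt0 ltNge (ltW c1).
Qed.

End GA.


Section Core.
Variable R : realType.

Definition witness (W B : 'M[R]_4) := exists (f g : 'cV[int]_4) (i j : 'I_4),
  minor f g i j != 0 /\ bil W (int_mx R f) (int_mx R g) = 0 /\
  bil B (int_mx R f) (int_mx R g) = 0.

Lemma reduce (W B : 'M[R]_4) : W^T = - W -> B^T = - B -> witness W B ->
  exists F : 'M[int]_4, \det F \is a GRing.unit /\
    vanishes_on_span W (int_mx R (col 0 F)) (int_mx R (col 1 F)) /\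
    vanishes_on_span B (int_mx R (col 0 F)) (int_mx R (col 1 F)).
Proof.
move=> hW hB [f [g [i [j [hm [h1 h2]]]]]].
have [F [hF hA]] := plane_ext R hm.
exists F; split => //; split; apply: vanish_of => //; exact: hA.
Qed.

Lemma K_case (G I B Q : 'M[R]_4) (Kz : 'M[int]_4) (d : R) :
  d != 0 -> G *m Q = d *: B -> G^T = G -> I^T *m G = - (G *m I) ->
  sa G (I *m int_mx R Kz) -> sa G (Q *m int_mx R Kz) -> Kz != (Kz 0 0)%:M ->
  witness (I^T *m G) B.
Proof.
move=> hd hGQ hG hIG h1 h2 hK.
have [f [i [j hm]]] := nonscalar_witness hK.
exists f, (Kz *m f), i, j; split => //.
rewrite int_mxM !bil_mulr; split.
  by rewrite hIG mulNmx -mulmxA bilN sa_quad // oppr0.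
set F := int_mx R f; set K := int_mx R Kz.
have h : d * bil (B *m K) F F = 0 by rewrite -bilZ scalemxAl -hGQ -mulmxA sa_quad.
by move/eqP: h; rewrite mulf_eq0 (negbTE hd) => /eqP.
Qed.

Lemma single_case (W B : 'M[R]_4) (Az : 'M[int]_4) c1 c2 :
  W = c1 *: int_mx R Az -> B = c2 *: int_mx R Az -> witness W B.
Proof.
move=> -> ->; have [f [g [i [j [hm h]]]]] := single_witness Az.
exists f, g, i, j; split => //.
by rewrite !bilZ int_bil h mulr0z !mulr0; split.
Qed.


Lemma core (Gz Bz Sz : 'M[int]_4) (I : 'M[R]_4) :
  (int_mx R Gz)^T = int_mx R Gz ->
  (forall u, u != 0 -> 0 < bil (int_mx R Gz) u u) ->
  (int_mx R Bz)^T = - int_mx R Bz -> (int_mx R Sz)^T = - int_mx R Sz ->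
  I *m I = - 1%:M ->
  I^T *m int_mx R Gz *m I = int_mx R Gz ->
  I^T *m int_mx R Sz *m I = int_mx R Sz ->
  I^T *m int_mx R Bz *m I = int_mx R Bz ->
  (forall u, u != 0 -> 0 < bil (int_mx R Sz) (I *m u) u) ->
  witness (I^T *m int_mx R Gz) (int_mx R Bz).
Proof.
set G := int_mx R Gz; set B := int_mx R Bz; set S := int_mx R Sz.
move=> hG hpos hB hS hI hcG hcS hcB hpS.
have tr_rel : forall A : 'M[R]_4, I^T *m A *m I = A -> I^T *m A = - (A *m I).
  move=> A hA; rewrite -{2}hA -mulmxA hI mulmxN mulmx1 opprK //.
have tIG := tr_rel G hcG; have tIS := tr_rel S hcS; have tIB := tr_rel B hcB.
pose d := \det Gz; pose dR : R := d%:~R.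
have detG : \det G = dR by rewrite /G /int_mx det_map_mx.
have hdR : dR != 0.
  apply/negP; rewrite -detG => /det0P [v hv hvG].
  have hu : v^T != 0 by rewrite trmx_eq0.
  by have := hpos _ hu; rewrite /bil trmxK hvG mul0mx mxE ltxx.
have hdd : 0 < dR * dR by rewrite lt0r mulf_neq0 //= -expr2 sqr_ge0.
pose Pz := d *: (\adj Gz *m Sz); pose Qz := \adj Gz *m Bz.
pose P := int_mx R Pz; pose Q := int_mx R Qz.
have GP : G *m P = (dR * dR) *: S.
  have h : Gz *m Pz = (d * d) *: Sz.
    by rewrite /Pz -scalemxAr mulmxA mul_mx_adj mul_scalar_mx scalerA.
  by rewrite /G /P -int_mxM h /int_mx map_mxZ rmorphM.
have GQ : G *m Q = dR *: B.
  have h : Gz *m Qz = d *: Bz by rewrite /Qz mulmxA mul_mx_adj mul_scalar_mx.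
  by rewrite /G /Q -int_mxM h /int_mx map_mxZ.
have Ginj : forall X Y : 'M[R]_4, G *m X = G *m Y -> X = Y.
  move=> X Y h; have := congr1 (mulmx (\adj G)) h.
  rewrite !mulmxA mul_adj_mx detG !mul_scalar_mx => /eqP.
  by rewrite -subr_eq0 -scalerBr scaler_eq0 (negbTE hdR) subr_eq0 => /eqP.
have GI : G *m I = - (I^T *m G) by rewrite tIG opprK.
have cIP : I *m P = P *m I.
  apply: Ginj; rewrite mulmxA GI mulNmx -mulmxA GP -scalemxAr tIS.
  by rewrite scalerN opprK scalemxAl -GP mulmxA.
have cIQ : I *m Q = Q *m I.
  apply: Ginj; rewrite mulmxA GI mulNmx -mulmxA GQ -scalemxAr tIB.
  by rewrite scalerN opprK scalemxAl -GQ mulmxA.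
have saI : sa G I by [].
have saP : sa G P.
  by rewrite /sa -{1}hG -trmx_mul GP linearZ /= hS scalerN.
have saQ : sa G Q.
  by rewrite /sa -{1}hG -trmx_mul GQ linearZ /= hB scalerN.
have posT : forall u, u != 0 -> 0 < bil G u ((- (P *m I)) *m u).
  move=> u hu; have := hpS u hu; rewrite bil_mull tIS bilN.
  rewrite mulNmx bilNr bil_mulr mulmxA GP -scalemxAl bilZ.
  by move=> h; rewrite -mulrN pmulr_rgt0.
have cIX : forall X Y : 'M[R]_4, I *m X = X *m I -> I *m Y = Y *m I ->
    I *m (X *m Y) = (X *m Y) *m I.
  by move=> X Y hX hY; rewrite mulmxA hX -mulmxA hY mulmxA.
have hQQ_int : int_mx R (Qz *m Qz) = Q *m Q by rewrite int_mxM.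
have ssQQ : ss G (Q *m Q) by apply: L1.
case hQ2 : (Qz *m Qz == ((Qz *m Qz) 0 0)%:M); last first.
  apply: (K_case (Kz := Qz *m Qz) hdR GQ hG tIG); rewrite ?hQ2 // hQQ_int.
  - by apply: L2 => //; apply: cIX.
  - by apply: L2 => //; rewrite mulmxA.
pose kap : R := ((Qz *m Qz) 0 0)%:~R.
have hQQ : Q *m Q = kap%:M.
  by rewrite -hQQ_int (eqP hQ2) /int_mx map_scalar_mx.
have hPP_int : int_mx R (Pz *m Pz) = P *m P by rewrite int_mxM.
have ssPP : ss G (P *m P) by apply: L1.
have [hQ0|hQ0] := eqVneq Qz 0.
  have Q0 : Q = 0 by rewrite /Q hQ0 /int_mx map_mx0.
  have B0 : B = 0.
    by move/eqP: GQ; rewrite Q0 mulmx0 eq_sym scaler_eq0 (negbTE hdR) => /eqP.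
  case hP2 : (Pz *m Pz == ((Pz *m Pz) 0 0)%:M); last first.
    apply: (K_case (Kz := Pz *m Pz) hdR GQ hG tIG); rewrite ?hP2 // hPP_int.
    - by apply: L2 => //; apply: cIX.
    - by rewrite Q0 mul0mx; apply: sa0.
  pose sig : R := ((Pz *m Pz) 0 0)%:~R.
  have hPP : P *m P = sig%:M.
    by rewrite -hPP_int (eqP hP2) /int_mx map_scalar_mx.
  have ssT : ss G (- (P *m I)) by apply/ssN/L1.
  have hTT : (- (P *m I)) *m (- (P *m I)) = (- sig)%:M.
    rewrite mulNmx mulmxN opprK mulmxA -[P *m I *m P]mulmxA cIP mulmxA hPP.
    by rewrite -mulmxA hI mulmxN mulmx1 raddfN.
  have [s [hs hT]] := psd_scalar hG hpos ssT posT hTT.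
  have hPs : P = s *: I.
    have := congr1 (mulmx^~ I) hT; rewrite /= mulNmx -mulmxA hI mulmxN mulmx1.
    by rewrite opprK mul_scalar_mx.
  apply: (single_case (Az := Sz) (c1 := - (s^-1 * (dR * dR))) (c2 := 0)).
    have hIs : I = s^-1 *: P by rewrite hPs scalerA mulVf ?gt_eqF // scale1r.
    rewrite hIs linearZ /= -scalemxAl saP -/S.
    by rewrite GP scalerN scalerA scaleNr.
  by rewrite B0 scale0r.
have hK_int : int_mx R (Pz *m Qz + Qz *m Pz) = P *m Q + Q *m P.
  by rewrite /int_mx map_mxD -!int_mxM.
case hPQ : (Pz *m Qz + Qz *m Pz == ((Pz *m Qz + Qz *m Pz) 0 0)%:M); last first.
  apply: (K_case (Kz := Pz *m Qz + Qz *m Pz) hdR GQ hG tIG); rewrite ?hPQ // hK_int.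
  - apply: L2 => //; first exact: L5.
    by rewrite mulmxDr mulmxDl !cIX.
  - rewrite mulmxDr !mulmxA hQQ mul_scalar_mx.
    by apply: saD; [apply: L3 | apply: saZ].
pose c : R := ((Pz *m Qz + Qz *m Pz) 0 0)%:~R.
have hPQc : P *m Q + Q *m P = c%:M.
  by rewrite -hK_int (eqP hPQ) /int_mx map_scalar_mx.
have Qne0 : Q != 0.
  apply: contraNneq hQ0 => hQ; apply/eqP/matrixP => a b.
  have := congr1 (fun M : 'M[R]_4 => M a b) hQ; rewrite !mxE => /eqP.
  by rewrite intr_eq0 => /eqP.
have hkap : kap < 0.
  have [u hu] := mx_ne0_col Qne0.
  have hu0 : u != 0 by apply: contraNneq hu => ->; rewrite mulmx0.
  have := hpos _ hu; rewrite bil_mull saQ bilN -bil_mulr mulmxA hQQ mul_scalar_mx bilZr.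
  by rewrite -mulNr pmulr_lgt0 ?hpos // oppr_gt0.
have IIh : forall A1 B1 : 'M[R]_4, I *m B1 = B1 *m I -> (A1 *m I) *m (B1 *m I) = - (A1 *m B1).
  move=> A1 B1 hB1; rewrite !mulmxA -[A1 *m I *m B1]mulmxA hB1 mulmxA.
  by rewrite -mulmxA hI mulmxN mulmx1.
pose P' := kap *: P - (c / 2) *: Q.
pose X := Q *m I; pose Y := P' *m I.
have ssX : ss G X by apply: L1 => //; rewrite cIQ.
have cIP' : I *m P' = P' *m I.
  by rewrite /P' mulmxBr mulmxBl -!scalemxAr -!scalemxAl cIP cIQ.
have X0 : X != 0.
  apply: contraNneq Qne0 => hX.
  have : X *m I = - Q by rewrite /X -mulmxA hI mulmxN mulmx1.
  by rewrite hX mul0mx => /eqP; rewrite eq_sym oppr_eq0.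
have XX : X *m X = (- kap)%:M.
  by rewrite /X IIh // hQQ raddfN.
have aQP' : Q *m P' + P' *m Q = 0.
  rewrite /P' mulmxBr mulmxBl -!scalemxAr -!scalemxAl.
  rewrite addrACA -scalerDr [Q *m P + _]addrC hPQc -opprD -scalerDr hQQ.
  apply/matrixP => i j; rewrite !mxE; case: (i == j) => /=; last by rewrite !mulr0n !(mulr0, addr0, oppr0).
  by rewrite !mulr1n; field.
have XY : X *m Y = - (Y *m X).
  rewrite /X /Y !IIh // opprK.
  by move/eqP: aQP'; rewrite addr_eq0 => /eqP ->; rewrite opprK.
have posXY : forall u, u != 0 -> 0 < bil G u (Y *m u) + (c / 2) * bil G u (X *m u).
  move=> u hu; rewrite -bilZr scalemxAl -bilDr -mulmxDl.
  have -> : Y + (c / 2) *: X = (- kap) *: (- (P *m I)).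
    by rewrite /Y /X /P' mulmxBl -!scalemxAl subrK scalerN scaleNr opprK.
  by rewrite -scalemxAl bilZr pmulr_lgt0 ?oppr_gt0 // posT.
have [e [he hX]] := case_b hpos ssX X0 XX XY posXY.
have hIe : I = (- e^-1) *: Q.
  have : X *m I = - Q by rewrite /X -mulmxA hI mulmxN mulmx1.
  rewrite hX mul_scalar_mx => /(congr1 (fun M => (- e^-1) *: M)).
  by rewrite scalerA mulNr mulVf // scaleN1r scalerN => /oppr_inj.
apply: (single_case (Az := Bz) (c1 := e^-1 * dR) (c2 := 1)); last by rewrite scale1r.
rewrite hIe linearZ /= -scalemxAl saQ GQ.
by rewrite scalerN scaleNr opprK scalerA.
Qed.

End Core.


Section Main.
Variable R : realType.

Lemma rat_scale (A : 'M[R]_4) : rational_mx A ->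
  exists (Az : 'M[int]_4) (n : R), 0 < n /\ int_mx R Az = n *: A.
Proof.
move=> hA.
have hq : forall i j, exists q : rat, A i j == ratr q.
  by move=> i j; have [q hq] := hA i j; exists q; apply/eqP.
pose q i j := xchoose (hq i j).
have qE : forall i j, A i j = ratr (q i j) by move=> i j; exact: (eqP (xchooseP (hq i j))).
pose N : int := \prod_(k : 'I_4 * 'I_4) denq (q k.1 k.2).
exists (\matrix_(i, j) (numq (q i j) * \prod_(k | k != (i, j)) denq (q k.1 k.2))), N%:~R.
split.
  by rewrite ltr0z /N prodr_gt0 // => k _; exact: denq_gt0.
apply/matrixP => i j.
have hN : N = denq (q i j) * \prod_(k | k != (i, j)) denq (q k.1 k.2).
  by rewrite /N (bigD1 (i, j)).
rewrite !mxE qE hN /ratr.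
have hd : (denq (q i j))%:~R != 0 :> R by rewrite intr_eq0 denq_neq0.
rewrite !rmorphM /=; field.
by [].
Qed.

Lemma witness_scale (W B : 'M[R]_4) a b : a != 0 -> b != 0 ->
  witness (a *: W) (b *: B) -> witness W B.
Proof.
move=> ha hb [f [g [i [j [hm [h1 h2]]]]]].
exists f, g, i, j; split => //; rewrite !bilZ in h1 h2; split.
  by move/eqP: h1; rewrite mulf_eq0 (negbTE ha) => /eqP.
by move/eqP: h2; rewrite mulf_eq0 (negbTE hb) => /eqP.
Qed.


Lemma tr_rel (I A : 'M[R]_4) : I *m I = - 1%:M -> I^T *m A *m I = A -> I^T *m A = - (A *m I).
Proof. by move=> hI hA; rewrite -{2}hA -mulmxA hI mulmxN mulmx1 opprK. Qed.

Lemma conj_eq (I A : 'M[R]_4) : (forall u v, bil A (I *m u) (I *m v) = bil A u v) ->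
  I^T *m A *m I = A.
Proof. by move=> h; apply: bil_eqP => u v; rewrite -bil_mulr -bil_mull h. Qed.

Lemma main_thm (G B I : 'M[R]_4) :
  is_metric G -> is_2form B ->
  rational_mx G -> rational_mx B ->
  is_cplx_structure I -> compatible G I -> polarizable I ->
  hodge20_zero I B ->
  exists F : 'M[int]_4,
    \det F \is a GRing.unit /\
    vanishes_on_span (kahler_form G I)
      (int_mx R (col 0 F)) (int_mx R (col 1 F)) /\
    vanishes_on_span B (int_mx R (col 0 F)) (int_mx R (col 1 F)).
Proof.
move=> [hGs hGpos] hB hGr hBr hI hcomp [psi [hpsi2 [hpsih [_ hpsipos]]]] hBh.
have [Gz [nG [hnG hGz]]] := rat_scale hGr.
have [Bz [nB [hnB hBz]]] := rat_scale hBr.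
have cG : I^T *m G *m I = G by apply: conj_eq.
have cB : I^T *m B *m I = B by apply: conj_eq => u v; have [h _] := hBh u v; apply/eqP; rewrite eq_sym -subr_eq0 h.
have cS : I^T *m int_mx R psi *m I = int_mx R psi.
  by apply: conj_eq => u v; have [h _] := hpsih u v; apply/eqP; rewrite eq_sym -subr_eq0 h.
have hw : witness (I^T *m int_mx R Gz) (int_mx R Bz).
  apply: (core (Sz := psi)) => //.
  - by rewrite hGz linearZ /= hGs.
  - by move=> u hu; rewrite hGz bilZ mulr_gt0 // hGpos.
  - by rewrite hBz linearZ /= hB scalerN.
  - by rewrite hGz -scalemxAr -scalemxAl cG.
  - by rewrite hBz -scalemxAr -scalemxAl cB.
have hw' : witness (kahler_form G I) B.
  apply: (witness_scale (a := nG) (b := nB)); rewrite ?gt_eqF //.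
  by rewrite /kahler_form scalemxAr -hGz -hBz.
apply: reduce hw' => //.
by rewrite /kahler_form trmx_mul trmxK hGs (tr_rel hI cG) opprK.
Qed.

End Main.


(* Gamma_f primitive of rank 2 in H_1(T^4;Z) = Z^4: Gamma_f = Z f1 + Z f2 where the
   columns of F (f1 = col 0 F, f2 = col 1 F) extend to a Z-basis of Z^4,
   i.e. F is unimodular; Gamma_b = Z (col 2 F) + Z (col 3 F). *)
Theorem theorem4p6 (R : realType) (G B I : 'M[R]_4) :
  is_metric G -> is_2form B ->
  rational_mx G -> rational_mx B ->
  is_cplx_structure I -> compatible G I -> polarizable I ->
  hodge20_zero I B ->
  exists F : 'M[int]_4,
    \det F \is a GRing.unit /\
    vanishes_on_span (kahler_form G I)
      (int_mx R (col 0 F)) (int_mx R (col 1 F)) /\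
    vanishes_on_span B (int_mx R (col 0 F)) (int_mx R (col 1 F)).
Proof. exact: main_thm. Qed.
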